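(* For all integers $k\geq1$, $c_{ECH}^k(E(1,2))=c_{ECH}^k(C(1))$.
   Context: For $a,b>0$, let $N_0\leq N_1\leq N_2\leq\cdots$ be the numbers $ma+nb$ with $m,n\in\mathbb{Z}_{\geq0}$ arranged in nondecreasing order with multiplicities (so $N_0=0$), and set $c_{ECH}^k(E(a,b)):=N_k$ for $k\geq0$. For the polydisc $P(a,b)$ set $c_{ECH}^k(P(a,b)):=\min\{am+bn: m,n\in\mathbb{Z}_{\geq0},\ (m+1)(n+1)\geq k+1\}$. The cube $C(1)$ is $P(1,1)$. *)

(* Defs.v *)
From Stdlib Require Import Reals ClassicalEpsilon.
Open Scope R_scope.

Definition ell_val (a b : R) (p : nat * nat) : R :=
  INR (fst p) * a + INR (snd p) * b.

(* s enumerates every pair (m,n) exactly once (so values are listed with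
   multiplicity) in nondecreasing order of m*a + n*b. *)
Definition ech_sorting (a b : R) (s : nat -> nat * nat) : Prop :=
  (forall p : nat * nat, exists! i : nat, s i = p) /\
  (forall i j : nat, (i <= j)%nat -> ell_val a b (s i) <= ell_val a b (s j)).

(* c_ECH^k(E(a,b)) := N_k, the k-th term (from 0) of the sorted list *)
Definition c_ech_E (a b : R) (k : nat) : R :=
  ell_val a b (epsilon (inhabits (fun _ : nat => (0%nat, 0%nat))) (ech_sorting a b) k).

Definition is_min (S : R -> Prop) (x : R) : Prop :=
  S x /\ forall y, S y -> x <= y.

Definition c_ech_P (a b : R) (k : nat) : R :=
  epsilon (inhabits 0)
    (is_min (fun t => exists m n : nat,
       t = a * INR m + b * INR n /\ (k + 1 <= (m + 1) * (n + 1))%nat)).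

Definition c_ech_C1 (k : nat) : R := c_ech_P 1 1 k.

(* Main.v *)
Require Import Defs.
From Stdlib Require Import Reals.
From Stdlib Require Import Arith Lia List Lra ClassicalEpsilon FinFun.
Import ListNotations.
Open Scope R_scope.

Lemma half_cases v : (v = 2*(v/2) \/ v = 2*(v/2)+1)%nat.
Proof. pose proof (Nat.div_mod v 2). pose proof (Nat.mod_upper_bound v 2). lia. Qed.

Lemma NoDup_app_disj {A} (l1 l2 : list A) a : NoDup (l1 ++ l2) -> In a l1 -> In a l2 -> False.
Proof.
  induction l1; simpl; intros ND H1 H2; [easy|].
  inversion ND; subst. destruct H1 as [->|H1].
  - apply H3. apply in_app_iff. auto.
  - eauto.
Qed.

Definition fv (p : nat * nat) : nat := (fst p + 2 * snd p)%nat.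

Definition blk (w : nat) : list (nat * nat) :=
  map (fun j => (w - 2 * j, j)%nat) (seq 0 (w / 2 + 1)).

Fixpoint L (v : nat) : list (nat * nat) :=
  match v with 0 => blk 0 | S v' => L v' ++ blk (S v') end.

Lemma blk_In w p : In p (blk w) <-> fv p = w.
Proof.
  unfold blk, fv; rewrite in_map_iff; split.
  - intros [j [Hj Hin]]. apply in_seq in Hin. subst p; cbn [fst snd].
    destruct (half_cases w); lia.
  - destruct p as [m n]; cbn [fst snd]; intros H. exists n. split.
    + cbn. idtac. f_equal. lia.
    + apply in_seq. destruct (half_cases w); lia.
Qed.

Lemma blk_len w : length (blk w) = (w / 2 + 1)%nat.
Proof. unfold blk. rewrite length_map, length_seq. reflexivity. Qed.

Lemma blk_NoDup w : NoDup (blk w).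
Proof.
  unfold blk. apply FinFun.Injective_map_NoDup; [|apply seq_NoDup].
  intros a b H. inversion H. auto.
Qed.

Lemma L_In v p : In p (L v) <-> (fv p <= v)%nat.
Proof.
  induction v; cbn [L].
  - rewrite blk_In; lia.
  - rewrite in_app_iff, IHv, blk_In; lia.
Qed.

Lemma L_NoDup v : NoDup (L v).
Proof.
  induction v; cbn [L]. apply blk_NoDup.
  apply NoDup_app; auto. apply blk_NoDup.
  intros p H1 H2. apply L_In in H1. apply blk_In in H2. lia.
Qed.

Lemma L_len v : length (L v) = ((v/2+1)*(v - v/2 + 1))%nat.
Proof.
  induction v; cbn [L]. reflexivity.
  rewrite length_app, IHv, blk_len.
  destruct (half_cases v) as [H|H]; destruct (half_cases (S v)) as [H'|H']; nia.
Qed.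

Lemma L_len_ge v : (v < length (L v))%nat.
Proof. rewrite L_len. destruct (half_cases v); nia. Qed.

Lemma L_prefix v w : (v <= w)%nat -> exists R, L w = L v ++ R.
Proof.
  induction 1. exists []. rewrite app_nil_r; auto.
  destruct IHle as [R HR]. exists (R ++ blk (S m)). cbn [L]. rewrite HR, app_assoc; auto.
Qed.

Lemma L_nth_stable i v w : (i < length (L v))%nat -> (v <= w)%nat ->
  nth i (L w) (0,0)%nat = nth i (L v) (0,0)%nat.
Proof.
  intros Hi Hvw. destruct (L_prefix v w Hvw) as [R HR]. rewrite HR, app_nth1; auto.
Qed.

Lemma L_nth_le i v w : (v <= w)%nat -> (i < length (L w))%nat ->
  ((fv (nth i (L w) (0,0)) <= v)%nat <-> (i < length (L v))%nat).
Proof.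
  intros Hvw Hi. destruct (L_prefix v w Hvw) as [R HR].
  split.
  - intros Hf. destruct (Nat.lt_ge_cases i (length (L v))) as [|Hge]; auto.
    exfalso. rewrite HR in Hf, Hi. rewrite app_nth2 in Hf by auto.
    rewrite length_app in Hi.
    assert (Hin : In (nth (i - length (L v)) R (0,0)%nat) R) by (apply nth_In; lia).
    pose proof (L_NoDup w) as ND2. rewrite HR in ND2.
    apply (NoDup_app_disj _ _ (nth (i - length (L v)) R (0,0)%nat) ND2); auto.
    apply L_In. auto.
  - intros Hl. rewrite (L_nth_stable i v w) by auto. apply L_In. apply nth_In. auto.
Qed.

Definition sN (k : nat) : nat * nat := nth k (L k) (0,0)%nat.

Lemma ell_fv p : ell_val 1 2 p = INR (fv p).
Proof. unfold ell_val, fv. rewrite plus_INR, mult_INR. simpl. lra. Qed.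

Lemma sN_eq i w : (i <= w)%nat -> sN i = nth i (L w) (0,0)%nat.
Proof. intros. unfold sN. symmetry. apply L_nth_stable; auto. apply L_len_ge. Qed.

Lemma sN_sorting : ech_sorting 1 2 sN.
Proof.
  split.
  - intros p. destruct (In_nth (L (fv p)) p (0,0)%nat) as [i [Hi Hp]].
    { apply L_In. lia. }
    assert (Hs : sN i = p).
    { destruct (Nat.le_ge_cases i (fv p)).
      * rewrite (sN_eq i (fv p)); auto.
      * unfold sN. rewrite (L_nth_stable i (fv p) i); auto. }
    exists i. split; auto.
    intros j Hj. set (w := Nat.max i j).
    rewrite (sN_eq i w) in Hs by lia. rewrite (sN_eq j w) in Hj by lia.
    pose proof (L_NoDup w) as ND. rewrite (NoDup_nth (L w) (0,0)%nat) in ND.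
    symmetry. apply ND.
    + pose proof (L_len_ge w). lia.
    + pose proof (L_len_ge w). lia.
    + congruence.
  - intros i j Hij. rewrite !ell_fv. apply le_INR. unfold sN.
    set (v := fv (nth j (L j) (0,0)%nat)).
    assert (Hvj : (v <= j)%nat).
    { apply L_In. apply nth_In. apply L_len_ge. }
    assert (Hj : (j < length (L v))%nat).
    { apply (L_nth_le j v j Hvj (L_len_ge j)). lia. }
    rewrite <- (L_nth_stable i i j) by (auto; apply L_len_ge).
    apply (proj2 (L_nth_le i v j Hvj ltac:(pose proof (L_len_ge j); lia))). lia.
Qed.

Lemma sorting_char s : ech_sorting 1 2 s -> forall i v,
  (fv (s i) <= v)%nat <-> (i < length (L v))%nat.
Proof.
  intros [Hb Hm] i v.
  assert (Mon : forall a b, (a <= b)%nat -> (fv (s a) <= fv (s b))%nat).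
  { intros a b H. apply INR_le. rewrite <- !ell_fv. auto. }
  assert (Inj : Injective s).
  { intros a b H. destruct (Hb (s a)) as [x [_ Hx]].
    rewrite <- (Hx a eq_refl). apply Hx. auto. }
  split.
  - intros Hf.
    assert (Hl : (length (map s (seq 0 (S i))) <= length (L v))%nat).
    { apply NoDup_incl_length.
      - apply Injective_map_NoDup; auto. apply seq_NoDup.
      - intros p Hp. apply in_map_iff in Hp. destruct Hp as [j [<- Hj]].
        apply in_seq in Hj. apply L_In. pose proof (Mon j i ltac:(lia)). lia. }
    rewrite length_map, length_seq in Hl. lia.
  - intros Hi. destruct (Nat.le_gt_cases (fv (s i)) v) as [|Hgt]; auto.
    exfalso.
    assert (Hl : (length (L v) <= length (map s (seq 0 i)))%nat).
    { apply NoDup_incl_length. apply L_NoDup.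
      intros p Hp. apply L_In in Hp. destruct (Hb p) as [j [Hj _]].
      apply in_map_iff. exists j. split; auto. apply in_seq.
      destruct (Nat.lt_ge_cases j i); [lia|].
      pose proof (Mon i j ltac:(lia)). subst p. lia. }
    rewrite length_map, length_seq in Hl. lia.
Qed.

Theorem lemma2p6 : forall k : nat, (1 <= k)%nat -> c_ech_E 1 2 k = c_ech_C1 k.
Proof.
  intros k _.
  unfold c_ech_E.
  set (s0 := epsilon _ (ech_sorting 1 2)).
  assert (Hs0 : ech_sorting 1 2 s0).
  { apply epsilon_spec. exists sN. apply sN_sorting. }
  rewrite ell_fv.
  set (v0 := fv (s0 k)).
  pose proof (sorting_char s0 Hs0 k) as C.
  assert (Hmin : is_min (fun t => exists m n : nat,
       t = 1 * INR m + 1 * INR n /\ (k + 1 <= (m + 1) * (n + 1))%nat) (INR v0)).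
  { split.
    - exists (v0/2)%nat, (v0 - v0/2)%nat. split.
      + rewrite !Rmult_1_l, <- plus_INR. f_equal. destruct (half_cases v0); lia.
      + assert (H := proj1 (C v0) (le_n _)). rewrite L_len in H. lia.
    - intros y [m [n [-> Hmn]]]. rewrite !Rmult_1_l.
      rewrite <- plus_INR. apply le_INR. apply C. rewrite L_len.
      assert ((m+1)*(n+1) <= ((m+n)/2+1)*((m+n)-(m+n)/2+1))%nat.
      { set (w := (m+n)%nat). assert (Hw : (m+n = w)%nat) by reflexivity. clearbody w.
        destruct (half_cases w) as [H'|H']; set (a := (w/2)%nat) in *; clearbody a; subst w.
        - destruct (Nat.le_ge_cases m a).
          + replace n with (a + (a-m))%nat by lia. nia.
          + replace m with (a + (m-a))%nat in * by lia. nia.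
        - destruct (Nat.le_ge_cases m a).
          + replace n with (a + 1 + (a-m))%nat by lia. nia.
          + replace m with (a + (m-a))%nat in * by lia. nia. }
      lia. }
  unfold c_ech_C1, c_ech_P.
  assert (He : is_min (fun t => exists m n : nat,
       t = 1 * INR m + 1 * INR n /\ (k + 1 <= (m + 1) * (n + 1))%nat)
       (epsilon (inhabits 0) (is_min (fun t => exists m n : nat,
       t = 1 * INR m + 1 * INR n /\ (k + 1 <= (m + 1) * (n + 1))%nat)))).
  { apply epsilon_spec. eauto. }
  destruct Hmin as [H1 H2]. destruct He as [H3 H4].
  apply Rle_antisym; auto.
Qed.
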